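(* If $X$ is a perfectly normal $T_1$ space, then $T''(X)$ is a (Von Neumann) regular ring.
   Context: $C(X)$ is the ring of real-valued continuous functions on $X$; a cozero set is a set $\{x: h(x)\neq 0\}$ with $h\in C(X)$. $T''(X)$ is the ring (under pointwise operations) of all functions $f\colon X\to\mathbb{R}$ for which there is a dense cozero set $U$ of $X$ with $f|_U$ continuous. A commutative ring $R$ is regular if for each $a\in R$ there is $x\in R$ with $a=a^2x$. $X$ is perfectly normal if it is normal and every closed set is a $G_\delta$-set (equivalently, every closed set is a zero set). *)

(* Defs.v *)
From mathcomp Require Import all_boot all_order all_algebra.
From mathcomp Require Import all_classical all_reals topology borel_hierarchy normedtype.
Import Order.TTheory GRing.Theory Num.Theory.
Import numFieldTopology.Exports numFieldNormedType.Exports.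
Local Open Scope classical_set_scope.
Local Open Scope ring_scope.

Definition perfectly_normal (X : topologicalType) : Prop :=
  normal_space X /\ forall A : set X, closed A -> Gdelta A.

Definition cozero_set {R : realType} (X : topologicalType) (U : set X) : Prop :=
  exists h : X -> R, continuous h /\ U = [set x | h x != 0].

Definition Tpp (R : realType) (X : topologicalType) (f : X -> R) : Prop :=
  exists U : set X, @cozero_set R X U /\ dense U /\ {within U, continuous f}.

Definition Tpp_regular (R : realType) (X : topologicalType) : Prop :=
  forall f : X -> R, Tpp R X f ->
    exists g : X -> R, Tpp R X g /\ forall x, f x = f x ^+ 2 * g x.

(* Main.v *)
Require Import Defs.
From mathcomp Require Import all_boot all_order all_algebra.
From mathcomp Require Import all_classical all_reals topology borel_hierarchy normedtype sequences numfun.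
From mathcomp Require Import ring lra.
Import Order.TTheory GRing.Theory Num.Theory.
Import numFieldTopology.Exports numFieldNormedType.Exports.
Local Open Scope classical_set_scope.
Local Open Scope ring_scope.
Section series.
Context {R : realType} {X : topologicalType}.
Variable g : nat -> X -> R.
Hypothesis gc : forall n, continuous (g n).
Hypothesis g0 : forall n x, 0 <= g n x.
Hypothesis g1 : forall n x, g n x <= 1.

Let w (k : nat) : R := (2^-1) ^+ k.+1.
Let S (n : nat) (x : X) : R := \sum_(k < n) w k * g k x.

Let w_ge0 k : 0 <= w k. Proof. by rewrite /w exprn_ge0 // invr_ge0. Qed.

Let Sbound x n j : S n x <= S (n + j) x <= S n x + (2^-1)^+n - (2^-1)^+(n+j).
Proof.
elim: j => [|j IH]; first by rewrite addn0 lexx /= addrK lexx.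
rewrite addnS /S big_ord_recr /= -/(S _ x).
have h1 : 0 <= w (n + j) * g (n + j) x by rewrite mulr_ge0.
have h2 : w (n + j) * g (n + j) x <= w (n+j).
  by rewrite -[leRHS]mulr1 ler_wpM2l.
have e : (2^-1:R) ^+ (n + j).+1 = (2^-1)^+(n+j) - w (n+j).
  by rewrite /w exprS; field.
change (\sum_(i < n + j) w i * g i x) with (S (n+j) x).
rewrite e; move: IH h1 h2.
move: (S n x) (S (n+j) x) (w (n + j) * g (n + j) x) (w (n+j)) ((2^-1:R)^+n) ((2^-1:R)^+(n+j)).
move=> a b c d p q /andP[h3 h4] h1 h2; apply/andP; split; lra.
Qed.

Let S0 x : S 0 x = 0. Proof. by rewrite /S big_ord0. Qed.

Let Sub x n : ubound (range (S ^~ x)) (S n x + (2^-1)^+n).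
Proof.
move=> _ [m _ <-]; have [nm|mn] := leqP n m.
  have := Sbound x n (m - n); rewrite subnKC // => /andP[_ h].
  have : 0 <= (2^-1 : R)^+ m by rewrite exprn_ge0 // invr_ge0.
  lra.
have := Sbound x m (n - m); rewrite subnKC; last exact: ltnW.
move=> /andP[h _].
by apply: (le_trans h); rewrite lerDl exprn_ge0 // invr_ge0.
Qed.

Definition Hs (x : X) : R := sup (range (S ^~ x)).

Let Hhas x : has_sup (range (S ^~ x)).
Proof. split; first by exists (S 0 x), 0%N. by exists (S 0 x + (2^-1)^+0); exact: Sub. Qed.

Let Hge x n : S n x <= Hs x.
Proof. by apply: sup_upper_bound => //; exists n. Qed.

Let Hle x n : Hs x <= S n x + (2^-1)^+n.
Proof. by apply: ge_sup; [exists (S 0 x), 0%N|exact: Sub]. Qed.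

Let Scont n : continuous (S n).
Proof.
elim: n => [|n IH].
  have -> : S 0 = fun=> 0 by apply/funext=> y; exact: S0.
  by move=> x; exact: cvg_cst.
have -> : S n.+1 = fun y => S n y + w n * g n y.
  by apply/funext => y; rewrite /S big_ord_recr.
move=> x; apply: cvgD; first exact: IH.
by apply: cvgM; [exact: cvg_cst| exact: gc].
Qed.

Let Hcont : continuous Hs.
Proof.
move=> x; apply/cvgrPdist_lt => e e0.
have e3 : 0 < e / 3 by rewrite divr_gt0.
have h2 : `|(2^-1 : R)| < 1.
  by rewrite ger0_norm ?invr_ge0 // invf_lt1 // ltr1n.
have [N _ HN] := cvgr0_norm_lt _ (cvg_geometric 1 h2) _ e3.
have hp : (2^-1:R)^+N < e/3.
  have := HN N (leqnn N); rewrite /geometric /= mul1r ger0_norm //.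
  by rewrite exprn_ge0 // invr_ge0.
have H := (cvgrPdist_lt _ _).1 (Scont N x) _ e3.
near=> y.
have hy : `|S N x - S N y| < e/3 by near: y; exact: H.
have a1 := Hge x N; have a2 := Hle x N; have a3 := Hge y N; have a4 := Hle y N.
move: hy a1 a2 a3 a4 hp; rewrite !ltr_norml.
move: (Hs x) (Hs y) (S N x) (S N y) ((2^-1:R)^+N) => a b c d p.
move=> /andP[h1 h2'] ? ? ? ? ?; apply/andP; split; lra.
Unshelve. all: by end_near.
Qed.

Let Hzero x : Hs x != 0 <-> exists n, g n x != 0.
Proof.
split.
  move=> hx; apply/not_existsP => hn; move/eqP: hx; apply.
  apply/eqP; rewrite eq_le; apply/andP; split; last first.
    by have := Hge x 0; rewrite S0.
  apply: ge_sup; first by exists (S 0 x), 0%N.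
  move=> _ [m _ <-]; rewrite /S big1 // => i _.
  have := hn i; move/negP; rewrite negbK => /eqP ->; by rewrite mulr0.
case=> n hn; have gp : 0 < g n x by rewrite lt_neqAle eq_sym hn g0.
have wp : 0 < w n by rewrite /w exprn_gt0 // invr_gt0.
have := Hge x n.+1; have := Sbound x 0 n; rewrite add0n S0 => /andP[h _].
have -> : S n.+1 x = S n x + w n * g n x by rewrite /S big_ord_recr.
have := mulr_gt0 wp gp.
move: (Hs x) (S n x) (w n * g n x) h => a b c h1 h2 h3.
rewrite gt_eqF //; lra.
Qed.

Lemma series_cozero_aux : exists h : X -> R, continuous h /\ forall x, h x != 0 <-> exists n, g n x != 0.
Proof. by exists Hs; split; [exact: Hcont | exact: Hzero]. Qed.

End series.
Lemma open_cozero (R : realType) (X : topologicalType) : perfectly_normal X ->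
  forall O : set X, open O -> exists h : X -> R, continuous h /\ O = [set x | h x != 0].
Proof.
move=> [nX gd] O oO.
have cC : closed (~` O) by exact: open_closedC.
have [F oF CF] := gd _ cC.
have ex n : exists f : X -> R, continuous f /\ (forall x, ~ O x -> f x = 0) /\
   (forall x, ~ F n x -> f x = 1) /\ (forall x, 0 <= f x <= 1).
  have cB : closed (~` F n) by exact: open_closedC.
  have AB : ~` O `&` ~` F n = set0.
    apply/seteqP; split => // x [Cx nFx]; apply: nFx.
    by move: Cx; rewrite CF; apply.
  have [f [fc f0 f1 fr]] := @urysohn_ext_itv X R nX _ _ 0 1 cC cB AB ltr01.
  exists f; split => //; split; first by move=> x Cx; apply: f0; exists x.
  split; first by move=> x Bx; apply: f1; exists x.
  move=> x; have : [set` `[(0:R), 1]] (f x) by apply: fr; exists x.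
  by rewrite /= in_itv.
have [g hg] := choice ex.
have [h [hc hz]] := @series_cozero_aux R X g (fun n => (hg n).1)
  (fun n x => proj1 (andP ((hg n).2.2.2 x))) (fun n x => proj2 (andP ((hg n).2.2.2 x))).
exists h; split => //.
apply/seteqP; split => x /=.
  move=> Ox; apply/hz.
  have : ~ (~` O) x by move=> /(_ Ox).
  rewrite CF => nF; have [n nFn] : exists n, ~ F n x.
    apply: contrapT => hn; apply: nF => m _; apply: contrapT => nf; apply: hn; by exists m.
  exists n.
  by rewrite ((hg n).2.2.1 x) ?oner_neq0.
move=> /hz [n gn]; apply/not_notP => nO.
by move: gn; rewrite ((hg n).2.1 x nO) eqxx.
Qed.
Lemma near_neq0 {R : realType} {T : topologicalType} (f : T -> R) x :
  {for x, continuous f} -> f x != 0 -> \forall y \near x, f y != 0.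
Proof.
move=> fc fx; have fxp : 0 < `|f x| by rewrite normr_gt0.
have H := (cvgrPdist_lt _ _).1 fc _ fxp.
near=> y; have h : `|f x - f y| < `|f x| by near: y; exact: H.
apply/eqP => fy0; move: h; rewrite fy0 subr0 ltxx.
Unshelve. all: by end_near.
Qed.

Theorem theorem3p2 (R : realType) (X : topologicalType) :
  perfectly_normal X -> @accessible_space X -> Tpp_regular R X.
Proof.
move=> pn _ f [U [[k [kc kU]] [dU fU]]].
have oU : open U.
  rewrite kU openE => x /= kx; rewrite /interior.
  have H := near_neq0 _ _ (kc x) kx; near=> y; near: y; exact: H.
have fcU : {in U, continuous f} by rewrite -continuous_open_subspace.
pose A := [set x | U x /\ f x != 0].
have oA : open A.
  rewrite openE => x [Ux fx]; rewrite /interior.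
  near=> y; split.
    by near: y; apply: open_nbhs_nbhs; split.
  by near: y; exact: (near_neq0 _ _ (fcU x (mem_set Ux)) fx).
pose V := A `|` (U `&` ~` closure A).
have oV : open V.
  apply: openU => //; apply: openI => //.
  exact/closed_openC/closed_closure.
have [h [hc hV]] := @open_cozero R X pn V oV.
exists (fun x => (f x)^-1); split; last first.
  move=> x; have [->|fx0] := eqVneq (f x) 0; first by rewrite expr0n mul0r.
  by rewrite expr2 -mulrA mulfV // mulr1.
exists V; split; first by exists h.
split.
  move=> W [w Ww] oW.
  have [u [Wu Uu]] := dU W (ex_intro _ w Ww) oW.
  have [[a [Wa Aa]]|nWA] := pselect (exists a, W a /\ A a).
    by exists a; split => //; left.
  exists u; split => //; right; split => // cl.
  have nb : nbhs u (W `&` U) by apply: open_nbhs_nbhs; split => //; exact: openI.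
  have [a [Aa [Wa Ua]]] := cl _ nb.
  by apply: nWA; exists a.
rewrite continuous_open_subspace // => x /set_mem [[Ux fx0]|[Ux ncl]].
  exact: continuousV fx0 (fcU x (mem_set Ux)).
have fx0 : f x = 0.
  apply/eqP; apply: contrapT => /negP fx; apply: ncl.
  by apply: subset_closure; split.
apply: cvg_near_cst.
have nb : nbhs x (U `&` ~` closure A).
  apply: open_nbhs_nbhs; split => //; apply: openI => //.
  exact/closed_openC/closed_closure.
near=> y.
have [Uy ny] : (U `&` ~` closure A) y by near: y.
have -> : f y = 0.
  apply/eqP; apply: contrapT => /negP fy; apply: ny.
  by apply: subset_closure; split.
by rewrite fx0.
Unshelve. all: by end_near.
Qed.
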